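(* Every neighborhood of $(\pi/4,0)$ in $\{(r,\epsilon):r>0,\ \epsilon\ge0,\ r+\epsilon<\pi/2\}$ contains a point $(r,\epsilon)$ with $\epsilon>0$ such that $(\mathcal{Y}^\parallel_{0,r,\epsilon})'(0)=0$.
   Context: Fix $\varphi\in C^\infty(\mathbb{R})$ with $0\le\varphi\le1$, $\varphi(x)=0$ for $x\le0$, $\varphi(x)=1$ for $x\ge1$, and let $H$ be the Heaviside function ($H(x)=1$ for $x>0$, $H(x)=0$ for $x\le0$). For $r>0$, $\epsilon\ge0$ with $r+\epsilon<\pi/2$ and $\rho\ge0$ set $K^\parallel_{r,\epsilon}(\rho)=1-2\varphi((\rho-r)/\epsilon)$ if $\epsilon>0$ and $K^\parallel_{r,0}(\rho)=1-2H(\rho-r)$. $\mathcal{Y}^\parallel_{0,r,\epsilon}$ denotes the unique solution on $[0,\infty)$ of $\mathcal{Y}''(t)+K^\parallel_{r,\epsilon}(t)\mathcal{Y}(t)=0$ (for $\epsilon=0$ a $C^1$ weak solution, i.e. solving the equation for $t\ne r$) with $\mathcal{Y}(t)=e^{-t}$ for all $t\ge r+\epsilon$. (This is the stable Jacobi solution along radial geodesics of $g_{r,\epsilon}$; if its derivative vanishes at $0$, $\mathcal{Y}^\parallel_{0,r,\epsilon}(|t|)E(t)$, $E$ parallel and normal, is a Jacobi field decaying as $t\to\pm\infty$.) *)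

(* Defs.v *)
From Stdlib Require Import Reals Lra.
Open Scope R_scope.

Definition smooth (f : R -> R) : Prop :=
  exists D : nat -> R -> R,
    D O = f /\ forall (n : nat) (x : R), derivable_pt_lim (D n) x (D (S n) x).

Definition cutoff (phi : R -> R) : Prop :=
  smooth phi /\
  (forall x, 0 <= phi x <= 1) /\
  (forall x, x <= 0 -> phi x = 0) /\
  (forall x, 1 <= x -> phi x = 1).

Definition Kpar (phi : R -> R) (r eps rho : R) : R :=
  1 - 2 * phi ((rho - r) / eps).

(* Y : [0,oo) -> R (values for t < 0 are irrelevant) with derivative Y'
   is the solution Y^par_{0,r,eps} (eps > 0): Y'' + K Y = 0 on (0,oo),
   Y' (0) is the right derivative of Y at 0, and Y(t) = e^{-t} for t >= r+eps.
   Such a solution is unique on [0,oo), so Y' 0 is well determined. *)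
Definition is_Ypar (phi : R -> R) (r eps : R) (Y Y' : R -> R) : Prop :=
  (forall t, 0 < t -> derivable_pt_lim Y t (Y' t)) /\
  (forall t, 0 < t -> derivable_pt_lim Y' t (- Kpar phi r eps t * Y t)) /\
  (forall e, 0 < e -> exists d, 0 < d /\
     forall h, 0 < h < d -> Rabs ((Y h - Y 0) / h - Y' 0) < e) /\
  (forall t, r + eps <= t -> Y t = exp (- t)).

(* Main.v *)
Require Import Defs.
From Stdlib Require Import Reals.
From Stdlib Require Import Lra Lia Ranalysis5.
From Coquelicot Require Import Coquelicot.
Open Scope R_scope.

Lemma geom_series_tail (a : nat -> R) (M rho : R) :
  0 <= rho < 1 -> 0 <= M -> (forall n, Rabs (a n) <= M * rho ^ n) ->
  ex_series a /\ forall n, Rabs (Series a - sum_f_R0 a n) <= M * rho ^ (S n) / (1 - rho).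
Proof.
  intros Hr HM Ha.
  assert (Hg : forall p, is_series (fun k => M * rho ^ p * rho ^ k) (M * rho ^ p * / (1 - rho))).
  { intro p. apply (is_series_scal (M * rho ^ p) (fun k => rho ^ k)).
    apply is_series_geom. rewrite Rabs_pos_eq; lra. }
  assert (Habs : forall p, ex_series (fun k => Rabs (a (p + k)%nat))).
  { intro p. apply (@ex_series_le R_AbsRing R_CompleteNormedModule _ (fun k => M * rho ^ p * rho ^ k)).
    - intro k. unfold norm; simpl. rewrite Rabs_Rabsolu. rewrite Rmult_assoc, <- pow_add. apply Ha.
    - eexists; apply Hg. }
  assert (Hex : ex_series a).
  { apply ex_series_Rabs. generalize (Habs 0%nat). apply ex_series_ext. intro; reflexivity. }
  split; [exact Hex|]. intro n.
  rewrite (Series_incr_n a (S n)) by (lia || exact Hex). simpl pred.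
  replace (sum_f_R0 a n + Series (fun k => a (S n + k)%nat) - sum_f_R0 a n)
    with (Series (fun k => a (S n + k)%nat)) by ring.
  eapply Rle_trans. apply Series_Rabs. apply Habs.
  eapply Rle_trans. apply (Series_le _ (fun k => M * rho ^ (S n) * rho ^ k)).
  - intro k. split. apply Rabs_pos. rewrite Rmult_assoc, <- pow_add. apply Ha.
  - eexists; apply Hg.
  - rewrite (is_series_unique _ _ (Hg (S n))). right; unfold Rdiv; ring.
Qed.

Lemma pow_small (C rho e : R) : 0 <= rho < 1 -> 0 <= C -> 0 < e ->
  exists N, forall n, (n >= N)%nat -> C * rho ^ n < e.
Proof.
  intros Hr HC He.
  destruct (pow_lt_1_zero rho ltac:(rewrite Rabs_pos_eq; lra) (e / (C + 1))) as [N HN].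
  { apply Rdiv_lt_0_compat; lra. }
  exists N. intros n Hn. specialize (HN n Hn).
  rewrite Rabs_pos_eq in HN by (apply pow_le; lra).
  assert (0 <= rho ^ n) by (apply pow_le; lra).
  apply Rmult_lt_compat_l with (r := C + 1) in HN; [|lra].
  replace ((C + 1) * (e / (C + 1))) with e in HN by (field; lra). nra.
Qed.

Lemma err_cvu (fn : nat -> R -> R) f c (r : posreal) C rho : 0 <= rho < 1 -> 0 <= C ->
  (forall n y, Boule c r y -> Rabs (f y - fn n y) <= C * rho ^ n) -> CVU fn f c r.
Proof.
  intros Hr HC H e He. destruct (pow_small C rho e Hr HC He) as [N HN].
  exists N. intros n y Hn Hy. eapply Rle_lt_trans. apply H; auto. apply HN; lia.
Qed.

Lemma err_cv (u : nat -> R) l C rho : 0 <= rho < 1 -> 0 <= C ->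
  (forall n, Rabs (l - u n) <= C * rho ^ n) -> Un_cv u l.
Proof.
  intros Hr HC H e He. destruct (pow_small C rho e Hr HC He) as [N HN].
  exists N. intros n Hn. unfold R_dist. rewrite Rabs_minus_sym. eapply Rle_lt_trans. apply H. apply HN; lia.
Qed.

Lemma prim_deriv (g : R -> R) : (forall x, continuous g x) ->
  forall s, is_derive (fun s => RInt g 0 s) s (g s).
Proof.
  intros Hc s. apply (is_derive_RInt g (fun s => RInt g 0 s) 0 s); auto.
  apply filter_forall. intro b. apply (@RInt_correct R_CompleteNormedModule). apply (@ex_RInt_continuous R_CompleteNormedModule). intros; auto.
Qed.

Lemma prim_bound (g : R -> R) M : (forall x, continuous g x) ->
  (forall t, Rabs t <= 2 -> Rabs (g t) <= M) ->
  forall s, Rabs s <= 2 -> Rabs (RInt g 0 s) <= Rabs s * M.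
Proof.
  intros Hc Hb s Hs. assert (Hs2 : -2 <= s <= 2) by (unfold Rabs in Hs; destruct (Rcase_abs s); lra).
  assert (Hex : forall a b, ex_RInt g a b) by (intros; apply (@ex_RInt_continuous R_CompleteNormedModule); intros; auto).
  destruct (Rle_or_lt 0 s) as [H0|H0].
  - rewrite (Rabs_pos_eq s) by lra. replace s with (s - 0) at 2 by ring.
    apply abs_RInt_le_const; [lra|auto|]. intros t Ht. apply Hb. apply Rabs_le; lra.
  - rewrite <- opp_RInt_swap by auto. rewrite (Rabs_left s) by lra.
    change (Rabs (- RInt g s 0) <= - s * M). rewrite Rabs_Ropp. replace (-s) with (0 - s) by ring.
    apply abs_RInt_le_const; [lra|auto|]. intros t Ht. apply Hb. apply Rabs_le; lra.
Qed.

Definition qf (phi : R -> R) (u : R) : R := 1 - 2 * phi (u + 1).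

Fixpoint AP (phi : R -> R) (eps : R) (n : nat) : (R -> R) * (R -> R) :=
  match n with
  | O => (fun u => 1 - eps * u, fun _ => - eps)
  | S m =>
      let d := fun s => RInt (fun v => - (eps * eps) * qf phi v * fst (AP phi eps m) v) 0 s in
      (fun s => RInt d 0 s, d)
  end.

Definition Aa phi eps n := fst (AP phi eps n).
Definition Ad phi eps n := snd (AP phi eps n).

Lemma derive_cont (f : R -> R) x l : is_derive f x l -> continuous f x.
Proof. intro H. apply (@ex_derive_continuous R_AbsRing R_NormedModule). exists l; exact H. Qed.

Lemma qf_cont phi : (forall x, continuous phi x) -> forall u, continuous (qf phi) u.
Proof.
  intros Hc u. unfold qf.
  apply (continuous_minus (fun _ => 1) (fun u => 2 * phi (u + 1))). apply continuous_const.
  apply (continuous_mult (fun _ => 2) (fun u => phi (u + 1))). apply continuous_const.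
  apply (continuous_comp (fun u => u + 1) phi). 
  apply (continuous_plus (fun u => u) (fun _ => 1)). apply continuous_id. apply continuous_const.
  apply Hc.
Qed.

Lemma qf_bound phi : (forall x, 0 <= phi x <= 1) -> forall u, Rabs (qf phi u) <= 1.
Proof. intros Hb u. unfold qf. specialize (Hb (u+1)). apply Rabs_le. lra. Qed.

Lemma AP_deriv phi eps : (forall x, continuous phi x) -> forall n,
  (forall u, is_derive (Aa phi eps n) u (Ad phi eps n u)) /\ (forall u, continuous (Ad phi eps n) u).
Proof.
  intros Hc n. induction n as [|n [IH1 IH2]].
  - split; intro u; unfold Aa, Ad; simpl.
    + auto_derive; auto. ring.
    + apply continuous_const.
  - assert (Hg : forall x, continuous (fun v => - (eps * eps) * qf phi v * Aa phi eps n v) x).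
    { intro x. apply (continuous_mult (fun v => - (eps * eps) * qf phi v) (Aa phi eps n)).
      apply (continuous_mult (fun _ => - (eps * eps)) (qf phi)). apply continuous_const. apply qf_cont; auto.
      eapply derive_cont; apply IH1. }
    assert (Hd : forall u, is_derive (Ad phi eps (S n)) u (- (eps * eps) * qf phi u * Aa phi eps n u)).
    { intro u. unfold Ad at 1. simpl. apply (prim_deriv _ Hg u). }
    split; intro u.
    + unfold Aa at 1. simpl. apply (prim_deriv (Ad phi eps (S n))). intro x.
      eapply derive_cont; apply Hd.
    + eapply derive_cont; apply Hd.
Qed.

Lemma Ad_deriv phi eps : (forall x, continuous phi x) -> forall m u,
  is_derive (Ad phi eps (S m)) u (- (eps * eps) * qf phi u * Aa phi eps m u).
Proof.
  intros Hc m u. unfold Ad at 1. simpl. apply (prim_deriv (fun v => - (eps * eps) * qf phi v * Aa phi eps m v)).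
  intro x. apply (continuous_mult (fun v => - (eps * eps) * qf phi v) (Aa phi eps m)).
  apply (continuous_mult (fun _ => - (eps * eps)) (qf phi)). apply continuous_const. apply qf_cont; auto.
  eapply derive_cont; apply (AP_deriv phi eps Hc m).
Qed.

Lemma AP_bound phi eps : (forall x, continuous phi x) -> (forall x, 0 <= phi x <= 1) ->
  0 <= eps <= 1/2 -> forall n u, Rabs u <= 2 ->
  Rabs (Aa phi eps n u) <= 2 * (4 * (eps * eps)) ^ n /\ Rabs (Ad phi eps n u) <= (4 * (eps * eps)) ^ n.
Proof.
  intros Hc Hb He n. set (rho := 4 * (eps * eps)). assert (Hr : 0 <= rho) by (unfold rho; nra).
  induction n as [|n IH]; intros u Hu.
  - unfold Aa, Ad; simpl. assert (-2 <= u <= 2) by (unfold Rabs in Hu; destruct (Rcase_abs u); lra).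
    split; apply Rabs_le; nra.
  - assert (Hd : forall u, Rabs u <= 2 -> Rabs (Ad phi eps (S n) u) <= rho ^ S n).
    { intros s Hs. unfold Ad. simpl.
      eapply Rle_trans. apply (prim_bound _ (eps * eps * (2 * rho ^ n))).
      + intro x. apply (continuous_mult (fun v => - (eps * eps) * qf phi v) (Aa phi eps n)).
        apply (continuous_mult (fun _ => - (eps * eps)) (qf phi)). apply continuous_const. apply qf_cont; auto.
        eapply derive_cont; apply (AP_deriv phi eps Hc n).
      + intros t Ht. rewrite !Rabs_mult. destruct (IH t Ht) as [H1 _].
        pose proof (qf_bound phi Hb t). rewrite Rabs_Ropp, Rabs_pos_eq by nra.
        assert (0 <= rho ^ n) by (apply pow_le; auto).
        pose proof (Rabs_pos (qf phi t)). pose proof (Rabs_pos (fst (AP phi eps n) t)).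
        unfold Aa in H1.
        assert (Rabs (qf phi t) * Rabs (fst (AP phi eps n) t) <= 2 * rho ^ n).
        { apply Rle_trans with (1 * Rabs (fst (AP phi eps n) t)); [apply Rmult_le_compat_r; lra | lra]. }
        rewrite Rmult_assoc. apply Rmult_le_compat_l; nra.
      + exact Hs.
      + assert (0 <= rho ^ n) by (apply pow_le; auto). pose proof (Rabs_pos s).
        unfold rho. simpl. fold rho.
        apply Rle_trans with (2 * (eps * eps * (2 * rho ^ n))).
        apply Rmult_le_compat_r; [nra|lra]. unfold rho; nra. }
    split; [|apply Hd; auto].
    unfold Aa. simpl. fold (Ad phi eps (S n)).
    eapply Rle_trans. apply (prim_bound _ (rho ^ S n)).
    + intro x. eapply derive_cont; apply (Ad_deriv phi eps Hc n x).
    + exact Hd.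
    + exact Hu.
    + assert (0 <= rho ^ S n) by (apply pow_le; auto). pose proof (Rabs_pos u).
      change (rho ^ S n) with (rho * rho ^ n) in *. apply Rmult_le_compat_r; lra.
Qed.

Definition Zf phi eps u := Series (fun n => Aa phi eps n u).
Definition Zdf phi eps u := Series (fun n => Ad phi eps n u).

Lemma sum_deriv (f f' : nat -> R -> R) (n : nat) (y : R) :
  (forall i, derivable_pt_lim (f i) y (f' i y)) ->
  derivable_pt_lim (fun y => sum_f_R0 (fun i => f i y) n) y (sum_f_R0 (fun i => f' i y) n).
Proof.
  intro H. induction n as [|n IH]; simpl.
  - apply H.
  - apply (derivable_pt_lim_plus (fun y => sum_f_R0 (fun i => f i y) n) (f (S n))); auto.
Qed.

Lemma Ad_der phi eps : (forall x, continuous phi x) -> forall n u, ex_derive (Ad phi eps n) u.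
Proof.
  intros Hc n u. destruct n.
  - exists 0. unfold Ad; simpl. apply is_derive_Reals. apply derivable_pt_lim_const.
  - eexists; apply Ad_deriv; auto.
Qed.

Lemma to_cpt (f : R -> R) x : continuous f x -> continuity_pt f x.
Proof. intro H. apply continuity_pt_filterlim. exact H. Qed.

Lemma sum_cont (f : nat -> R -> R) n y : (forall i, continuity_pt (f i) y) ->
  continuity_pt (fun y => sum_f_R0 (fun i => f i y) n) y.
Proof.
  intro H. induction n as [|n IH]; simpl.
  - apply H.
  - apply (continuity_pt_plus (fun y => sum_f_R0 (fun i => f i y) n) (f (S n))); auto.
Qed.

Definition two : posreal := mkposreal 2 ltac:(lra).

Section Z.
End Z.

Lemma Z_facts phi eps : (forall x, continuous phi x) -> (forall x, 0 <= phi x <= 1) ->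
  0 < eps <= 1/4 ->
  let rho := 4 * (eps * eps) in
  (forall u, Rabs u <= 2 -> forall n,
     Rabs (Zf phi eps u - sum_f_R0 (fun i => Aa phi eps i u) n) <= 2 * rho ^ (S n) / (1 - rho) /\
     Rabs (Zdf phi eps u - sum_f_R0 (fun i => Ad phi eps i u) n) <= 1 * rho ^ (S n) / (1 - rho)).
Proof.
  intros Hc Hb He rho u Hu n.
  assert (Hr : 0 <= rho < 1) by (unfold rho; nra).
  split.
  - apply (geom_series_tail (fun i => Aa phi eps i u) 2 rho Hr ltac:(lra)).
    intro k. apply (AP_bound phi eps Hc Hb ltac:(lra) k u Hu).
  - apply (geom_series_tail (fun i => Ad phi eps i u) 1 rho Hr ltac:(lra)).
    intro k. rewrite Rmult_1_l. apply (AP_bound phi eps Hc Hb ltac:(lra) k u Hu).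
Qed.

Lemma Z_deriv phi eps : (forall x, continuous phi x) -> (forall x, 0 <= phi x <= 1) ->
  0 < eps <= 1/4 -> forall x, Rabs x < 2 ->
  derivable_pt_lim (Zf phi eps) x (Zdf phi eps x).
Proof.
  intros Hc Hb He x Hx. set (rho := 4 * (eps * eps)).
  assert (Hr : 0 <= rho < 1) by (unfold rho; nra).
  assert (HF := Z_facts phi eps Hc Hb He).
  assert (Hb2 : forall y, Boule 0 two y -> Rabs y <= 2).
  { intros y Hy. unfold Boule in Hy. simpl in Hy. rewrite Rminus_0_r in Hy. lra. }
  apply (derivable_pt_lim_CVU (fun n y => sum_f_R0 (fun i => Aa phi eps i y) n)
           (fun n y => sum_f_R0 (fun i => Ad phi eps i y) n) _ _ x 0 two).
  - unfold Boule; simpl. rewrite Rminus_0_r. exact Hx.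
  - intros y n Hy. apply sum_deriv. intro i. apply is_derive_Reals. apply AP_deriv; auto.
  - intros y Hy. apply (err_cv _ _ (2 * rho / (1 - rho)) rho Hr).
    apply Rdiv_le_0_compat; lra.
    intro n. destruct (HF y (Hb2 y Hy) n) as [H _]. eapply Rle_trans; [exact H|].
    right. simpl. fold rho. field. lra.
  - apply (err_cvu _ _ _ _ (1 * rho / (1 - rho)) rho Hr).
    apply Rdiv_le_0_compat; lra.
    intros n y Hy. destruct (HF y (Hb2 y Hy) n) as [_ H]. eapply Rle_trans; [exact H|].
    right. simpl. fold rho. field. lra.
  - intros y Hy. apply (CVU_continuity (fun n y => sum_f_R0 (fun i => Ad phi eps i y) n) (Zdf phi eps) 0 two).
    + apply (err_cvu _ _ _ _ (1 * rho / (1 - rho)) rho Hr).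
      apply Rdiv_le_0_compat; lra.
      intros n z Hz. destruct (HF z (Hb2 z Hz) n) as [_ H]. eapply Rle_trans; [exact H|].
      right. simpl. fold rho. field. lra.
    + intros n z Hz. apply sum_cont. intro i. apply to_cpt. apply derive_cont with (Derive (Ad phi eps i) z).
      apply Derive_correct. apply Ad_der; auto.
    + exact Hy.
Qed.

Lemma Zd_deriv phi eps : (forall x, continuous phi x) -> (forall x, 0 <= phi x <= 1) ->
  0 < eps <= 1/4 -> forall x, Rabs x < 2 ->
  derivable_pt_lim (Zdf phi eps) x (- (eps * eps) * qf phi x * Zf phi eps x).
Proof.
  intros Hc Hb He x Hx. set (rho := 4 * (eps * eps)).
  assert (Hr : 0 <= rho < 1) by (unfold rho; nra).
  assert (HF := Z_facts phi eps Hc Hb He).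
  assert (Hb2 : forall y, Boule 0 two y -> Rabs y <= 2).
  { intros y Hy. unfold Boule in Hy. simpl in Hy. rewrite Rminus_0_r in Hy. lra. }
  assert (Hsum : forall y n, sum_f_R0 (fun i => - (eps * eps) * qf phi y * Aa phi eps i y) n
                  = - (eps * eps) * qf phi y * sum_f_R0 (fun i => Aa phi eps i y) n).
  { intros y n. rewrite scal_sum. apply sum_eq. intros; ring. }
  apply (derivable_pt_lim_CVU (fun n y => Ad phi eps 0 y + sum_f_R0 (fun i => Ad phi eps (S i) y) n)
           (fun n y => 0 + sum_f_R0 (fun i => - (eps * eps) * qf phi y * Aa phi eps i y) n) _
           (fun y => - (eps * eps) * qf phi y * Zf phi eps y) x 0 two).
  - unfold Boule; simpl. rewrite Rminus_0_r. exact Hx.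
  - intros y n Hy.
    apply (derivable_pt_lim_plus (Ad phi eps 0) (fun y => sum_f_R0 (fun i => Ad phi eps (S i) y) n)).
    + change (derivable_pt_lim (fct_cte (- eps)) y 0). apply derivable_pt_lim_const.
    + apply (sum_deriv (fun i => Ad phi eps (S i)) (fun i y => - (eps * eps) * qf phi y * Aa phi eps i y)).
      intro i. apply is_derive_Reals. apply Ad_deriv; auto.
  - intros y Hy. apply (err_cv _ _ (1 * (rho * rho) / (1 - rho)) rho Hr).
    apply Rdiv_le_0_compat; nra.
    intro n. destruct (HF y (Hb2 y Hy) (S n)) as [_ H].
    rewrite (decomp_sum _ (S n)) in H by lia. simpl pred in H.
    eapply Rle_trans; [exact H|].
    right. unfold rho. simpl. field. nra.
  - apply (err_cvu _ _ _ _ (eps * eps * (2 * rho) / (1 - rho)) rho Hr).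
    apply Rdiv_le_0_compat; nra.
    intros n y Hy. destruct (HF y (Hb2 y Hy) n) as [H _].
    rewrite Hsum, Rplus_0_l.
    replace (- (eps * eps) * qf phi y * Zf phi eps y - - (eps * eps) * qf phi y * sum_f_R0 (fun i => Aa phi eps i y) n)
      with ((- (eps * eps) * qf phi y) * (Zf phi eps y - sum_f_R0 (fun i => Aa phi eps i y) n)) by ring.
    rewrite Rabs_mult. pose proof (qf_bound phi Hb y).
    rewrite Rabs_mult, Rabs_Ropp, (Rabs_pos_eq (eps * eps)) by nra.
    apply Rle_trans with (eps * eps * 1 * (2 * rho ^ S n / (1 - rho))).
    + apply Rmult_le_compat; try apply Rabs_pos. apply Rmult_le_pos; [nra|apply Rabs_pos].
      apply Rmult_le_compat_l; nra. exact H.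
    + right. simpl. field. lra.
  - intros y Hy. apply continuity_pt_mult.
    + apply continuity_pt_mult. apply continuity_pt_const. intros a b; reflexivity.
      apply to_cpt. apply qf_cont; auto.
    + apply derivable_continuous_pt. exists (Zdf phi eps y). apply Z_deriv; auto.
      unfold Boule in Hy; simpl in Hy. rewrite Rminus_0_r in Hy. exact Hy.
Qed.

Lemma Z_at0 phi eps : (forall x, continuous phi x) -> (forall x, 0 <= phi x <= 1) ->
  0 < eps <= 1/4 -> Zf phi eps 0 = 1 /\ Zdf phi eps 0 = - eps.
Proof.
  intros Hc Hb He. set (rho := 4 * (eps * eps)).
  assert (Hr : 0 <= rho < 1) by (unfold rho; nra).
  assert (Hz : Rabs 0 <= 2) by (rewrite Rabs_R0; lra).
  assert (E1 : ex_series (fun n => Aa phi eps n 0)).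
  { apply (geom_series_tail _ 2 rho Hr ltac:(lra)). intro k. apply (AP_bound phi eps Hc Hb ltac:(lra) k 0 Hz). }
  assert (E2 : ex_series (fun n => Ad phi eps n 0)).
  { apply (geom_series_tail _ 1 rho Hr ltac:(lra)). intro k. rewrite Rmult_1_l. apply (AP_bound phi eps Hc Hb ltac:(lra) k 0 Hz). }
  assert (S0 : Series (fun _ : nat => 0) = 0).
  { rewrite (Series_ext (fun _ : nat => 0) (fun n => 0 * 0)) by (intro; ring). rewrite Series_scal_l. ring. }
  split.
  - unfold Zf. rewrite Series_incr_1 by exact E1.
    rewrite (Series_ext _ (fun _ => 0)). rewrite S0. unfold Aa; simpl. ring.
    intro n. unfold Aa; simpl. apply (@RInt_point R_CompleteNormedModule).
  - unfold Zdf. rewrite Series_incr_1 by exact E2.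
    rewrite (Series_ext _ (fun _ => 0)). rewrite S0. unfold Ad; simpl. ring.
    intro n. unfold Ad; simpl. apply (@RInt_point R_CompleteNormedModule).
Qed.

Lemma comp_affine (F : R -> R) (l c r eps t : R) : eps <> 0 ->
  derivable_pt_lim F ((t - r - eps) / eps) l ->
  derivable_pt_lim (fun t => c * F ((t - r - eps) / eps)) t (c * l / eps).
Proof.
  intros He H. apply is_derive_Reals. apply is_derive_Reals in H.
  replace (c * l / eps) with (c * (/ eps * l)) by (field; auto).
  apply is_derive_scal.
  apply (is_derive_comp F (fun t => (t - r - eps) / eps) t l (/ eps)); auto.
  auto_derive; auto. field; auto.
Qed.

Lemma glue (f g h : R -> R) a d l : 0 < d ->
  (forall t, a - d < t <= a -> f t = g t) -> (forall t, a <= t < a + d -> f t = h t) ->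
  derivable_pt_lim g a l -> derivable_pt_lim h a l -> derivable_pt_lim f a l.
Proof.
  intros Hd Hg Hh Dg Dh e He.
  destruct (Dg e He) as [d1 H1]. destruct (Dh e He) as [d2 H2].
  assert (Hpos : 0 < Rmin d (Rmin d1 d2)).
  { apply Rmin_pos; auto. apply Rmin_pos; [apply (cond_pos d1)|apply (cond_pos d2)]. }
  exists (mkposreal _ Hpos). intros k Hk Hk2. simpl in Hk2.
  assert (Ha : f a = g a) by (apply Hg; lra).
  assert (Ha' : f a = h a) by (apply Hh; lra).
  pose proof (Rmin_l d (Rmin d1 d2)). pose proof (Rmin_r d (Rmin d1 d2)).
  pose proof (Rmin_l d1 d2). pose proof (Rmin_r d1 d2).
  assert (Hk3 : -d < k < d) by (destruct (Rabs_def2 k d); lra).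
  assert (Hk4 : Rabs k < d1) by lra. assert (Hk5 : Rabs k < d2) by lra.
  destruct (Rle_or_lt k 0) as [Hn|Hp].
  - rewrite Hg by lra. rewrite Ha. apply H1; auto.
  - rewrite Hh by lra. rewrite Ha'. apply H2; auto.
Qed.

Lemma loc (f g : R -> R) x a b l : a < x < b -> (forall t, a < t < b -> f t = g t) ->
  derivable_pt_lim g x l -> derivable_pt_lim f x l.
Proof.
  intros Hx Hfg Dg. apply (glue f g g x (Rmin (x - a) (b - x))).
  - apply Rmin_pos; lra.
  - intros t Ht. pose proof (Rmin_l (x - a) (b - x)). pose proof (Rmin_r (x - a) (b - x)). apply Hfg; lra.
  - intros t Ht. pose proof (Rmin_l (x - a) (b - x)). pose proof (Rmin_r (x - a) (b - x)). apply Hfg; lra.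
  - exact Dg.
  - exact Dg.
Qed.

Lemma construct phi eps :
  (forall x, continuous phi x) -> (forall x, 0 <= phi x <= 1) ->
  (forall x, x <= 0 -> phi x = 0) -> (forall x, 1 <= x -> phi x = 1) ->
  0 < eps <= 1/4 -> Zf phi eps (-1) <> 0 ->
  0 < atan (- Zdf phi eps (-1) / (eps * Zf phi eps (-1))) ->
  exists Y Y' : R -> R,
    is_Ypar phi (atan (- Zdf phi eps (-1) / (eps * Zf phi eps (-1)))) eps Y Y' /\ Y' 0 = 0.
Proof.
  intros Hc Hb H0 H1 He HZ Hr.
  set (Z1 := Zf phi eps (-1)) in *. set (Zd1 := Zdf phi eps (-1)) in *.
  set (w := - Zd1 / (eps * Z1)) in *. set (r := atan w) in *.
  assert (Hr2 : r < PI / 2) by (destruct (atan_bound w); unfold r; lra).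
  assert (Hcos : 0 < cos r) by (apply cos_gt_0; lra).
  assert (Htan : sin r = w * cos r).
  { rewrite <- (tan_atan w). fold r. unfold tan. field. lra. }
  set (c := exp (- (r + eps))).
  set (A0 := c * Z1 / cos r).
  destruct (Z_at0 phi eps Hc Hb He) as [Z0 Zd0].
  set (Y := fun t => if Rle_dec t r then A0 * cos t
                     else if Rle_dec t (r + eps) then c * Zf phi eps ((t - r - eps) / eps) else exp (- t)).
  set (Y' := fun t => if Rle_dec t r then - (A0 * sin t)
                     else if Rle_dec t (r + eps) then c * Zdf phi eps ((t - r - eps) / eps) / eps else - exp (- t)).
  assert (Hne : eps <> 0) by lra.
  assert (Vr : A0 * cos r = c * Z1) by (unfold A0; field; lra).
  assert (Vr' : - (A0 * sin r) = c * Zd1 / eps).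
  { rewrite Htan. unfold A0, w. field. repeat split; lra. }
  assert (Um1 : (r - r - eps) / eps = -1) by (field; lra).
  assert (U0 : (r + eps - r - eps) / eps = 0) by (field; lra).
  assert (Hu : forall t, r - eps / 2 < t < r + eps + eps / 2 -> Rabs ((t - r - eps) / eps) < 2).
  { intros t Ht. apply Rabs_def1.
    - apply (Rmult_lt_reg_r eps); [lra|]. unfold Rdiv. rewrite Rmult_assoc, Rinv_l by lra. lra.
    - apply (Rmult_lt_reg_r eps); [lra|]. unfold Rdiv. rewrite Rmult_assoc, Rinv_l by lra. lra. }
  assert (D1 : forall t, derivable_pt_lim (fun t => A0 * cos t) t (- (A0 * sin t))).
  { intro t. apply is_derive_Reals. auto_derive; auto. ring. }
  assert (D1' : forall t, derivable_pt_lim (fun t => - (A0 * sin t)) t (- (A0 * cos t))).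
  { intro t. apply is_derive_Reals. auto_derive; auto. ring. }
  assert (D3 : forall t, derivable_pt_lim (fun t => exp (- t)) t (- exp (- t))).
  { intro t. apply is_derive_Reals. auto_derive; auto. ring. }
  assert (D3' : forall t, derivable_pt_lim (fun t => - exp (- t)) t (exp (- t))).
  { intro t. apply is_derive_Reals. auto_derive; auto. ring. }
  assert (D2 : forall t, r - eps / 2 < t < r + eps + eps / 2 ->
     derivable_pt_lim (fun t => c * Zf phi eps ((t - r - eps) / eps)) t
        (c * Zdf phi eps ((t - r - eps) / eps) / eps)).
  { intros t Ht. apply comp_affine; auto. apply Z_deriv; auto. }
  assert (D2' : forall t, r - eps / 2 < t < r + eps + eps / 2 ->
     derivable_pt_lim (fun t => c * Zdf phi eps ((t - r - eps) / eps) / eps) t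
        (- (1 - 2 * phi ((t - r) / eps)) * (c * Zf phi eps ((t - r - eps) / eps)))).
  { intros t Ht.
    apply (derivable_pt_lim_ext (fun t => (c / eps) * Zdf phi eps ((t - r - eps) / eps))).
    { intro s. unfold Rdiv. ring. }
    replace (- (1 - 2 * phi ((t - r) / eps)) * (c * Zf phi eps ((t - r - eps) / eps)))
      with (c / eps * (- (eps * eps) * qf phi ((t - r - eps) / eps) * Zf phi eps ((t - r - eps) / eps)) / eps).
    apply comp_affine; auto. apply Zd_deriv; auto.
    unfold qf. replace ((t - r - eps) / eps + 1) with ((t - r) / eps) by (field; lra). field. lra. }
  assert (K1 : forall t, t <= r -> Kpar phi r eps t = 1).
  { intros t Ht. unfold Kpar. rewrite H0. ring. unfold Rdiv. apply Rmult_le_0_r. lra. apply Rlt_le, Rinv_0_lt_compat. lra. }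
  assert (K3 : forall t, r + eps <= t -> Kpar phi r eps t = -1).
  { intros t Ht. unfold Kpar. rewrite H1. ring. apply (Rmult_le_reg_r eps); [lra|]. unfold Rdiv. rewrite Rmult_assoc, Rinv_l by lra. lra. }
  exists Y, Y'. split; [split; [|split; [|split]]|].
  -
    intros t Ht. destruct (Rlt_or_le t r) as [T1|T1].
    + apply (loc Y (fun t => A0 * cos t) t (t - 1) r).
      lra. intros s Hs. unfold Y. destruct (Rle_dec s r); [reflexivity|lra].
      unfold Y'. destruct (Rle_dec t r); [apply D1|lra].
    + destruct (Req_dec t r) as [T2|T2].
      * subst t. unfold Y'. destruct (Rle_dec r r); [|lra]. rewrite Vr'.
        apply (glue Y (fun t => A0 * cos t) (fun t => c * Zf phi eps ((t - r - eps) / eps)) r (eps / 2)).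
        lra.
        intros s Hs. unfold Y. destruct (Rle_dec s r); [reflexivity|lra].
        intros s Hs. unfold Y. destruct (Rle_dec s r). assert (s = r) by lra. subst s. rewrite Um1. exact Vr.
        destruct (Rle_dec s (r + eps)); [reflexivity|lra].
        rewrite <- Vr'. apply D1.
        replace (c * Zd1 / eps) with (c * Zdf phi eps ((r - r - eps) / eps) / eps) by (rewrite Um1; reflexivity).
        apply D2. lra.
      * destruct (Rlt_or_le t (r + eps)) as [T3|T3].
        -- apply (loc Y (fun t => c * Zf phi eps ((t - r - eps) / eps)) t r (r + eps)).
           lra. intros s Hs. unfold Y. destruct (Rle_dec s r); [lra|]. destruct (Rle_dec s (r + eps)); [reflexivity|lra].
           unfold Y'. destruct (Rle_dec t r); [lra|]. destruct (Rle_dec t (r + eps)); [|lra]. apply D2. lra.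
        -- destruct (Req_dec t (r + eps)) as [T4|T4].
           ++ subst t. unfold Y'. destruct (Rle_dec (r + eps) r); [lra|]. destruct (Rle_dec (r + eps) (r + eps)); [|lra].
              rewrite U0, Zd0. replace (c * - eps / eps) with (- exp (- (r + eps))) by (unfold c; field; lra).
              apply (glue Y (fun t => c * Zf phi eps ((t - r - eps) / eps)) (fun t => exp (- t)) (r + eps) (eps / 2)).
              lra.
              intros s Hs. unfold Y. destruct (Rle_dec s r); [lra|]. destruct (Rle_dec s (r + eps)); [reflexivity|lra].
              intros s Hs. unfold Y. destruct (Rle_dec s r); [lra|]. destruct (Rle_dec s (r + eps)); [|reflexivity].
              assert (s = r + eps) by lra. subst s. rewrite U0, Z0. unfold c. ring.
              replace (- exp (- (r + eps))) with (c * Zdf phi eps ((r + eps - r - eps) / eps) / eps)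
                by (rewrite U0, Zd0; unfold c; field; lra).
              apply D2. lra.
              apply D3.
           ++ apply (loc Y (fun t => exp (- t)) t (r + eps) (t + 1)).
              lra. intros s Hs. unfold Y. destruct (Rle_dec s r); [lra|]. destruct (Rle_dec s (r + eps)); [lra|reflexivity].
              unfold Y'. destruct (Rle_dec t r); [lra|]. destruct (Rle_dec t (r + eps)); [lra|]. apply D3.
  -
    intros t Ht. destruct (Rlt_or_le t r) as [T1|T1].
    + unfold Y. destruct (Rle_dec t r); [|lra]. rewrite K1 by lra.
      apply (loc Y' (fun t => - (A0 * sin t)) t (t - 1) r).
      lra. intros s Hs. unfold Y'. destruct (Rle_dec s r); [reflexivity|lra].
      replace (- (1) * (A0 * cos t)) with (- (A0 * cos t)) by ring. apply D1'.
    + destruct (Req_dec t r) as [T2|T2].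
      * subst t. unfold Y. destruct (Rle_dec r r); [|lra]. rewrite K1 by lra. rewrite Vr.
        apply (glue Y' (fun t => - (A0 * sin t)) (fun t => c * Zdf phi eps ((t - r - eps) / eps) / eps) r (eps / 2)).
        lra.
        intros s Hs. unfold Y'. destruct (Rle_dec s r); [reflexivity|lra].
        intros s Hs. unfold Y'. destruct (Rle_dec s r). assert (s = r) by lra. subst s. rewrite Um1. exact Vr'.
        destruct (Rle_dec s (r + eps)); [reflexivity|lra].
        rewrite <- Vr. replace (- (1) * (A0 * cos r)) with (- (A0 * cos r)) by ring. apply D1'.
        replace (- (1) * (c * Z1)) with (- (1 - 2 * phi ((r - r) / eps)) * (c * Zf phi eps ((r - r - eps) / eps))).
        apply D2'. lra.
        rewrite Um1. replace ((r - r) / eps) with 0 by (field; lra). rewrite H0 by lra. fold Z1. ring.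
      * destruct (Rlt_or_le t (r + eps)) as [T3|T3].
        -- unfold Y. destruct (Rle_dec t r); [lra|]. destruct (Rle_dec t (r + eps)); [|lra].
           unfold Kpar.
           apply (loc Y' (fun t => c * Zdf phi eps ((t - r - eps) / eps) / eps) t r (r + eps)).
           lra. intros s Hs. unfold Y'. destruct (Rle_dec s r); [lra|]. destruct (Rle_dec s (r + eps)); [reflexivity|lra].
           apply D2'. lra.
        -- destruct (Req_dec t (r + eps)) as [T4|T4].
           ++ subst t. unfold Y. destruct (Rle_dec (r + eps) r); [lra|]. destruct (Rle_dec (r + eps) (r + eps)); [|lra].
              rewrite K3 by lra. rewrite U0, Z0.
              replace (- -1 * (c * 1)) with (exp (- (r + eps))) by (unfold c; ring).
              apply (glue Y' (fun t => c * Zdf phi eps ((t - r - eps) / eps) / eps) (fun t => - exp (- t)) (r + eps) (eps / 2)).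
              lra.
              intros s Hs. unfold Y'. destruct (Rle_dec s r); [lra|]. destruct (Rle_dec s (r + eps)); [reflexivity|lra].
              intros s Hs. unfold Y'. destruct (Rle_dec s r); [lra|]. destruct (Rle_dec s (r + eps)); [|reflexivity].
              assert (s = r + eps) by lra. subst s. rewrite U0, Zd0. unfold c. field. lra.
              replace (exp (- (r + eps))) with (- (1 - 2 * phi ((r + eps - r) / eps)) * (c * Zf phi eps ((r + eps - r - eps) / eps))).
              apply D2'. lra.
              rewrite U0, Z0. replace ((r + eps - r) / eps) with 1 by (field; lra). rewrite H1 by lra. unfold c. ring.
              apply D3'.
           ++ unfold Y. destruct (Rle_dec t r); [lra|]. destruct (Rle_dec t (r + eps)); [lra|].
              rewrite K3 by lra. replace (- -1 * exp (- t)) with (exp (- t)) by ring.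
              apply (loc Y' (fun t => - exp (- t)) t (r + eps) (t + 1)).
              lra. intros s Hs. unfold Y'. destruct (Rle_dec s r); [lra|]. destruct (Rle_dec s (r + eps)); [lra|reflexivity].
              apply D3'.
  -
    intros e He0. destruct (D1 0 e He0) as [d Hd].
    exists (Rmin d r). split. apply Rmin_pos; [apply (cond_pos d)|lra].
    intros h Hh. pose proof (Rmin_l d r). pose proof (Rmin_r d r).
    unfold Y, Y'. destruct (Rle_dec h r); [|lra]. destruct (Rle_dec 0 r); [|lra].
    replace h with (0 + h) at 1 by ring. apply Hd. lra. rewrite Rabs_pos_eq; lra.
  - intros t Ht. unfold Y. destruct (Rle_dec t r); [lra|]. destruct (Rle_dec t (r + eps)); [|reflexivity].
    assert (t = r + eps) by lra. subst t. rewrite U0, Z0. unfold c. ring.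
  - unfold Y'. destruct (Rle_dec 0 r); [|lra]. rewrite sin_0. ring.
Qed.

Lemma abs_le_inv x a : Rabs x <= a -> - a <= x <= a.
Proof. unfold Rabs; destruct (Rcase_abs x); lra. Qed.

Lemma estimate phi eps : (forall x, continuous phi x) -> (forall x, 0 <= phi x <= 1) ->
  0 < eps <= 1/100 ->
  0 < Zf phi eps (-1) /\
  Rabs (- Zdf phi eps (-1) / (eps * Zf phi eps (-1)) - 1) <= 10 * eps.
Proof.
  intros Hc Hb He.
  assert (He' : 0 < eps <= 1/4) by lra.
  assert (Hm : Rabs (-1) <= 2) by (unfold Rabs; destruct (Rcase_abs (-1)); lra).
  destruct (Z_facts phi eps Hc Hb He' (-1) Hm 0) as [HA HD].
  simpl in HA, HD. unfold Aa, Ad in HA, HD. simpl in HA, HD.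
  set (Z1 := Zf phi eps (-1)) in *. set (Zd1 := Zdf phi eps (-1)) in *.
  set (rho := 4 * (eps * eps)) in *.
  assert (Hr : 0 <= rho <= 4 / 10000) by (unfold rho; nra).
  assert (Hq : rho * 1 / (1 - rho) <= 2 * rho).
  { apply (Rmult_le_reg_r (1 - rho)); [lra|]. unfold Rdiv. rewrite Rmult_assoc, Rinv_l by lra. nra. }
  replace (2 * (rho * 1) / (1 - rho)) with (2 * (rho * 1 / (1 - rho))) in HA by (field; lra).
  replace (1 * (rho * 1) / (1 - rho)) with (rho * 1 / (1 - rho)) in HD by (field; lra).
  assert (HA' : Rabs (Z1 - (1 - eps * -1)) <= 4 * rho) by lra.
  assert (HD' : Rabs (Zd1 - - eps) <= 2 * rho) by lra.
  apply abs_le_inv in HA'. apply abs_le_inv in HD'.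
  unfold rho in *.
  assert (HZ : 1 <= Z1) by nra.
  split; [lra|].
  assert (HD0 : eps <= eps * Z1) by nra.
  replace (- Zd1 / (eps * Z1) - 1) with ((- Zd1 - eps * Z1) / (eps * Z1)) by (field; lra).
  unfold Rdiv. rewrite Rabs_mult, Rabs_inv, (Rabs_pos_eq (eps * Z1)) by nra.
  apply (Rmult_le_reg_r (eps * Z1)); [lra|]. rewrite Rmult_assoc, Rinv_l by lra.
  rewrite Rmult_1_r. apply Rabs_le. split; nra.
Qed.

Theorem proposition3p1 :
  forall phi : R -> R, cutoff phi ->
  forall delta : R, 0 < delta ->
  exists r eps : R,
    0 < r /\ 0 < eps /\ r + eps < PI / 2 /\
    Rabs (r - PI / 4) < delta /\ eps < delta /\
    exists Y Y' : R -> R, is_Ypar phi r eps Y Y' /\ Y' 0 = 0.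
Proof.
  intros phi [[D [HD0 HD]] [Hb [H0 H1]]] delta Hd.
  assert (Hc : forall x, continuous phi x).
  { intro x. apply (derive_cont phi x (D 1%nat x)). apply is_derive_Reals. rewrite <- HD0. apply HD. }
  set (d1 := Rmin delta (1/2)).
  assert (Hd1 : 0 < d1) by (apply Rmin_pos; lra).
  pose proof (Rmin_l delta (1/2)). pose proof (Rmin_r delta (1/2)). fold d1 in H, H2.
  assert (Hat := to_cpt atan 1 (continuous_atan 1)).
  destruct (Hat d1 Hd1) as [eta [Heta Hat2]].
  set (eps := Rmin (1/100) (Rmin (d1 / 2) (eta / 20))).
  assert (He : 0 < eps) by (apply Rmin_pos; [lra|apply Rmin_pos; lra]).
  pose proof (Rmin_l (1/100) (Rmin (d1 / 2) (eta / 20))).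
  pose proof (Rmin_r (1/100) (Rmin (d1 / 2) (eta / 20))).
  pose proof (Rmin_l (d1 / 2) (eta / 20)). pose proof (Rmin_r (d1 / 2) (eta / 20)).
  fold eps in H3, H4.
  destruct (estimate phi eps Hc Hb ltac:(lra)) as [HZ Hw].
  set (w := - Zdf phi eps (-1) / (eps * Zf phi eps (-1))) in *.
  apply abs_le_inv in Hw.
  assert (Hwp : 0 < w) by lra.
  assert (Hat3 : Rabs (atan w - PI / 4) < d1).
  { rewrite <- atan_1. destruct (Req_dec w 1) as [E|E].
    - rewrite E. unfold Rminus. rewrite Rplus_opp_r, Rabs_R0. lra.
    - apply (Hat2 w). split. split; [exact I|auto]. unfold R_dist. apply Rabs_def1; lra. }
  assert (Hrp : 0 < atan w) by (rewrite <- atan_0; apply atan_increasing; lra).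
  exists (atan w), eps.
  pose proof PI2_3_2.

  assert (Hat5 := Rlt_le _ _ Hat3). apply abs_le_inv in Hat5.
  split; [exact Hrp|]. split; [exact He|]. split; [lra|]. split; [lra|]. split; [lra|].
  apply construct; auto; try lra.
Qed.
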